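(* Consider the problem $\min_{x\in\mathbb{R}^n}\max_{y\in\Delta}F(x)^Ty$ and assume strict complementarity holds. If $(x,y)$ is a stationary solution, then the vectors $(\nabla f_i(x)^T,1)^T\in\mathbb{R}^{n+1}$, $i\in\mathcal{T}(x)$, are linearly independent (equivalently, the matrix with rows $(\nabla f_i(x)^T,1)$, $i\in\mathcal{T}(x)$, has full row rank).
   Context: $F(x)=(f_1(x),\dots,f_m(x))^T$ is a smooth map $\mathbb{R}^n\to\mathbb{R}^m$ and $\Delta$ the probability simplex in $\mathbb{R}^m$. $(x^*,y^* )$ is a stationary solution if there exist $\mu\in\mathbb{R}$, $\nu\in\mathbb{R}^m$ with $\sum_iy_i^*\nabla f_i(x^* )=0$, $\sum_iy_i^*=1$, $y_i^*\ge0$, $\mu-\nu_i=f_i(x^* )$, $\nu_i\ge0$, $\nu_iy_i^*=0$ for all $i$ (KKT system). Strict complementarity: for every $(x^*,y^*,\mu,\nu)$ satisfying the KKT system, $\nu_i>0$ for all $i$ with $y_i^*=0$. $\mathcal{T}(x)=\{i\in[m]:f_i(x)=\max_jf_j(x)\}$. *)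

(* Defs.v *)
From HB Require Import structures.
From mathcomp Require Import all_boot all_order all_algebra.
From mathcomp Require Import all_classical all_reals all_analysis.
Set Implicit Arguments. Unset Strict Implicit. Unset Printing Implicit Defensive.
Import Order.TTheory GRing.Theory Num.Theory.
Import numFieldNormedType.Exports.
Local Open Scope ring_scope.

Section Defs.
Variables (R : realType) (n m : nat).
Implicit Types (f : 'I_m -> 'rV[R]_n -> R) (x : 'rV[R]_n) (y nu : 'I_m -> R) (mu : R).

Definition grad f (i : 'I_m) x : 'rV[R]_n :=
  \row_(j < n) ('D_(delta_mx 0 j) (f i) x).

(* KKT system of min_x max_{y in simplex} F(x)^T y *)
Definition KKT f x y mu nu : Prop :=
  \sum_(i < m) y i *: grad f i x = 0 /\
  \sum_(i < m) y i = 1 /\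
  (forall i, 0 <= y i) /\
  (forall i, mu - nu i = f i x) /\
  (forall i, 0 <= nu i) /\
  (forall i, nu i * y i = 0).

Definition stationary f x y : Prop := exists mu nu, KKT f x y mu nu.

Definition strict_complementarity f : Prop :=
  forall x y mu nu, KKT f x y mu nu -> forall i, y i = 0 -> 0 < nu i.

Definition active_set f x : {set 'I_m} :=
  [set i | [forall j, f j x <= f i x]].

Definition ext_grad f (i : 'I_m) x : 'rV[R]_(n + 1) :=
  row_mx (grad f i x) (1 : 'rV[R]_1).

End Defs.

(* Main.v *)
Require Import Defs.
From HB Require Import structures.
From mathcomp Require Import all_boot all_order all_algebra.
From mathcomp Require Import all_classical all_reals all_analysis.
From mathcomp Require Import lra.
Import Order.TTheory GRing.Theory Num.Theory.
Import numFieldNormedType.Exports.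
Local Open Scope ring_scope.

Lemma core (R : realType) (n m : nat) (f : 'I_m -> 'rV[R]_n -> R)
  (hsc : strict_complementarity f) x y mu nu (hk : KKT f x y mu nu)
  (c : 'I_m -> R) (csupp : forall i, c i != 0 -> i \in active_set f x)
  (hg : \sum_i c i *: grad f i x = 0) (hs : \sum_i c i = 0) :
  forall i, c i = 0.
Proof.
have [hk1 [hk2 [hk3 [hk4 [hk5 hk6]]]]] := hk.
have nuT : forall i, i \in active_set f x -> nu i = 0.
  move=> i; rewrite inE => /forallP hi.
  have [j _ yj] : exists2 j, true & y j != 0.
    apply/exists_inP; apply: contraT; rewrite negb_exists_in => /forall_inP H.
    move: hk2; rewrite big1 ?(@oner_eq0 R) //; last by move=> j _; apply/eqP/negPn/H.
    by move/eqP; rewrite eq_sym oner_eq0.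
  have nuj : nu j = 0 by have := hk6 j; move/eqP; rewrite mulf_eq0 (negPf yj) orbF => /eqP.
  have := hk4 j; have := hk4 i; have := hi j; have := hk5 i; rewrite nuj.
  move=> a b e1 e2; apply/eqP; rewrite eq_le a andbT; lra.
move=> i2; apply/eqP; apply: contraT => cnz.
have [i1 ci1] : exists i1, c i1 < 0.
  apply/existsP; apply: contraT; rewrite negb_exists => /forallP H.
  have H' : forall i, 0 <= c i by move=> i; have := H i; rewrite -leNgt.
  have := psumr_eq0P (fun i _ => H' i) hs (i:=i2) isT.
  by move/eqP; rewrite (negPf cnz).
case: (arg_minP (fun i => y i / - c i) (P := fun i => c i < 0) ci1) => i0 ci0 hmin.
set t := y i0 / - c i0.
have t0 : 0 <= t by apply: divr_ge0 => //; rewrite oppr_ge0 ltW.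
pose y' i := y i + t * c i.
have hk' : KKT f x y' mu nu.
  split; [|split; [|split; [|split; [|split]]]] => //.
  - rewrite /y'; under eq_bigr do rewrite scalerDl.
    rewrite big_split /= hk1 add0r; under eq_bigr do rewrite -scalerA; by rewrite -scaler_sumr hg scaler0.
  - by rewrite /y' big_split /= hk2 -mulr_sumr hs mulr0 addr0.
  - move=> i; rewrite /y'; case: (ltrP (c i) 0) => ci.
      have := hmin i ci; rewrite -/t => hle.
      have cpos : 0 < - c i by rewrite oppr_gt0.
      rewrite ler_pdivlMr // in hle; lra.
    by apply: addr_ge0 => //; apply: mulr_ge0.
  - move=> i; rewrite /y' mulrDr hk6 add0r.
    have [->|cn] := eqVneq (c i) 0; first by rewrite !mulr0.
    by rewrite nuT ?mul0r // csupp.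
have := hsc _ _ _ _ hk' i0.
rewrite nuT ?ltxx; last by apply: csupp; rewrite lt_eqF.
move=> H; suff : y' i0 = 0 by move/H.
rewrite /y' /t invrN mulrN mulNr -mulrA mulVf ?mulr1 ?subrr //.
by rewrite lt_eqF.
Qed.

Theorem lemma20 (R : realType) (n m : nat) (f : 'I_m -> 'rV[R]_n -> R)
  (hdiff : forall i x, differentiable (f i) x)
  (hsc : strict_complementarity f)
  (x : 'rV[R]_n) (y : 'I_m -> R)
  (hst : stationary f x y) :
  free [seq ext_grad f i x | i <- enum (active_set f x)].
Proof.
have [mu [nu hk]] := hst.
set s := enum (active_set f x).
apply/(freeP (X := in_tuple [seq ext_grad f i x | i <- s])) => k hk0 j.
set N := size _ in k hk0 j *.
have sz : N = size s by rewrite /N size_map.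
have sm : (size s <= m)%N by rewrite /s -cardE -[X in (_ <= X)%N]card_ord max_card.
have jlt : (j < size s)%N by rewrite -sz.
pose d : 'I_m := Ordinal (leq_trans jlt sm).
pose g (j : 'I_N) := nth d s j.
have Xg : forall j : 'I_N, [seq ext_grad f i x | i <- s]`_j = ext_grad f (g j) x.
  by move=> j'; rewrite (nth_map d) // -sz.
have gT : forall j : 'I_N, g j \in active_set f x.
  by move=> j'; rewrite -mem_enum mem_nth // -sz.
have ginj : injective g.
  move=> a b /eqP; rewrite /g nth_uniq ?enum_uniq // -?sz // => /eqP ab.
  exact: val_inj.
pose c i := \sum_(j < N | i == g j) k j.
have hg : \sum_i c i *: grad f i x = 0.
  transitivity (\sum_(j < N) k j *: grad f (g j) x).
    rewrite /c; under eq_bigr do rewrite scaler_suml.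
    rewrite (exchange_big_dep xpredT) //=; apply: eq_bigr => j' _.
    by rewrite big_pred1_eq.
  apply/rowP => l; rewrite [RHS]mxE summxE.
  have := congr1 (fun M : 'rV_(n + 1) => M 0 (lshift 1 l)) hk0.
  rewrite /= summxE [RHS]mxE => h; apply: (etrans _ h); apply: eq_bigr => j' _.
  by rewrite Xg [RHS]mxE row_mxEl [LHS]mxE.
have hs : \sum_i c i = 0.
  transitivity (\sum_(j < N) k j).
    rewrite /c (exchange_big_dep xpredT) //=; apply: eq_bigr => j' _.
    by rewrite big_pred1_eq.
  have := congr1 (fun M : 'rV_(n + 1) => M 0 (rshift n 0)) hk0.
  rewrite /= summxE [RHS]mxE => h; apply: (etrans _ h); apply: eq_bigr => j' _.
  by rewrite Xg [RHS]mxE row_mxEr mxE mulr1.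
have csupp : forall i, c i != 0 -> i \in active_set f x.
  move=> i; apply: contraR => iT; rewrite /c big_pred0 // => j'.
  by apply/eqP => ei; move: iT; rewrite ei gT.
have c0 := @core _ _ _ _ hsc _ _ _ _ hk _ csupp hg hs.
have -> : k j = c (g j).
  rewrite /c (big_pred1 j) // => j' /=; apply/eqP/eqP => [/ginj|->] //.
exact: c0.
Qed.
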